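(* Let $a\geq 1$ and $n,p>1$ be integers and let $G$ be a regular graph. Then $apG\circ nK_1$ is distance magic if and only if $aH_{n,p}\otimes G$ is distance magic.
   Context: A graph $G$ on $v$ vertices is distance magic if there is a bijection $f:V(G)\to\{1,\ldots,v\}$ and a constant $k$ such that for every vertex $x$, $\sum_{y\in N(x)}f(y)=k$, where $N(x)$ is the set of neighbours of $x$. $H_{n,p}$ denotes the complete multipartite graph with $p$ partite sets each of size $n$; $cH$ denotes the disjoint union of $c$ copies of $H$; $nK_1$ is the edgeless graph on $n$ vertices. The lexicographic product $G\circ H$ has vertex set $V(G)\times V(H)$, with $(g,h)\sim(g',h')$ iff $gg'\in E(G)$, or $g=g'$ and $hh'\in E(H)$. The Kronecker (tensor) product $G\otimes H$ has vertex set $V(G)\times V(H)$, with $(g,h)\sim(g',h')$ iff $gg'\in E(G)$ and $hh'\in E(H)$. *)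

(* Defs.v *)
From mathcomp Require Import all_boot.
Unset Printing Implicit Defensive.

Definition simple_graph {V : finType} (adj : rel V) : Prop :=
  symmetric adj /\ irreflexive adj.

Definition regular {V : finType} (adj : rel V) : Prop :=
  exists r : nat, forall x : V, #|[pred y | adj x y]| = r.

(* distance magic: a bijection f : V -> {1,...,|V|} (encoded as
   x |-> (f x).+1 with f : V -> 'I_#|V| bijective) and a constant k such that
   the labels of the neighbours of every vertex sum to k. *)
Definition distance_magic {V : finType} (adj : rel V) : Prop :=
  exists f : V -> 'I_#|V|, bijective f /\
    exists k : nat, forall x : V, \sum_(y | adj x y) (f y).+1 = k.

Definition copies (c : nat) {V : finType} (adj : rel V) : rel ('I_c * V) :=
  fun u w => (u.1 == w.1) && adj u.2 w.2.

Definition edgeless (n : nat) : rel 'I_n := fun _ _ => false.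

(* H_{n,p} : complete multipartite graph with p parts of size n;
   vertex (i, j) is the j-th vertex of the i-th part *)
Definition Hnp (n p : nat) : rel ('I_p * 'I_n) :=
  fun u w => u.1 != w.1.

Definition lexprod {V W : finType} (adjG : rel V) (adjH : rel W) : rel (V * W) :=
  fun u w => adjG u.1 w.1 || ((u.1 == w.1) && adjH u.2 w.2).

Definition kronprod {V W : finType} (adjG : rel V) (adjH : rel W) : rel (V * W) :=
  fun u w => adjG u.1 w.1 && adjH u.2 w.2.

(* Main.v *)
Require Import Defs.
From mathcomp Require Import all_boot zify.
Lemma sum_pair (X Y : finType) (P : pred (X * Y)) (F : X * Y -> nat) :
  \sum_(w | P w) F w = \sum_x \sum_y (if P (x, y) then F (x, y) else 0).
Proof.
rewrite big_mkcond (pair_bigA _ (fun x y => if P (x,y) then F (x,y) else 0)).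
by apply: eq_bigr => -[x y].
Qed.

Lemma sum_if_eq (X : finType) (x0 : X) (G : X -> nat) :
  \sum_x (if x0 == x then G x else 0) = G x0.
Proof.
rewrite -big_mkcond /=.
rewrite (eq_bigl (fun x => x == x0)) ?big_pred1_eq // => x; exact: eq_sym.
Qed.

Lemma lex_sum (m n : nat) (V : finType) (e : rel V) (c : 'I_m) (v : V) (j : 'I_n)
  (F : ('I_m * V) * 'I_n -> nat) :
  \sum_(w | lexprod (copies m e) (edgeless n) ((c, v), j) w) F w =
  \sum_(y | e v y) \sum_j' F ((c, y), j').
Proof.
rewrite sum_pair.
rewrite (eq_bigr (fun cy => (fun c' y => if c == c' then (if e v y then \sum_j' F ((c', y), j') else 0) else 0) cy.1 cy.2)); last first.
  move=> [c' y] _ /=.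
  rewrite /lexprod /copies /edgeless /= andbF orbF.
  case: (c == c') => /=; last by rewrite big1.
  by case: (e v y) => //; rewrite big1.
rewrite -(pair_bigA _ (fun c' y => if c == c' then (if e v y then \sum_j' F ((c', y), j') else 0) else 0)) /=.
rewrite (eq_bigr (fun c' => if c == c' then \sum_y (if e v y then \sum_j' F ((c', y), j') else 0) else 0)).
  by rewrite sum_if_eq -big_mkcond.
move=> c' _; case: (c == c') => //; by rewrite big1.
Qed.

Lemma sum_prod (X Y : finType) (F : X * Y -> nat) :
  \sum_w F w = \sum_x \sum_y F (x, y).
Proof.
rewrite (pair_bigA _ (fun x y => F (x,y))).
by apply: eq_bigr => -[x y].
Qed.
Lemma kron_sum (a n p : nat) (V : finType) (e : rel V) (b : 'I_a) (i : 'I_p) (j : 'I_n) (v : V)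
  (F : ('I_a * ('I_p * 'I_n)) * V -> nat) :
  \sum_(w | kronprod (copies a (Hnp n p)) e ((b, (i, j)), v) w) F w =
  \sum_(i' | i' != i) \sum_(y | e v y) \sum_j' F ((b, (i', j')), y).
Proof.
rewrite big_mkcond sum_prod sum_prod.

under eq_bigr => b' _ do rewrite sum_prod.

rewrite /kronprod /copies /Hnp /=.
rewrite (eq_bigr (fun b' => if b == b' then \sum_i' \sum_j' \sum_y (if (i != i') && e v y then F (b', (i', j'), y) else 0) else 0)); last first.
  move=> b' _; case: (b == b') => //=.
  by rewrite big1 // => ? _; rewrite big1 // => ? _; rewrite big1.
rewrite sum_if_eq [RHS]big_mkcond /=.
apply: eq_bigr => i' _.
rewrite (eq_sym i' i); case: (i != i') => /=; last first.
  by rewrite big1 // => ? _; rewrite big1.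
rewrite exchange_big /= [RHS]big_mkcond /=.
by apply: eq_bigr => y _; case: (e v y) => //; rewrite big1.
Qed.

Lemma card_bij (A B : finType) : #|A| = #|B| -> exists f : A -> B, bijective f.
Proof.
move=> E.
exists (fun x => enum_val (cast_ord E (enum_rank x))).
exists (fun y => enum_val (cast_ord (esym E) (enum_rank y))).
  by move=> x; rewrite enum_valK cast_ordK enum_rankK.
by move=> y; rewrite enum_valK cast_ordKV enum_rankK.
Qed.

Lemma transfer (X Y : finType) (g : X -> 'I_#|X|) (psi : Y -> X) :
  bijective g -> bijective psi ->
  exists h : Y -> 'I_#|Y|, bijective h /\ forall y, nat_of_ord (h y) = g (psi y).
Proof.
move=> bg bpsi.
have E : #|X| = #|Y| by apply/esym/(bij_eq_card bpsi).
exists (fun y => cast_ord E (g (psi y))); split => //.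
apply: bij_comp; last exact: bij_comp.
by exists (cast_ord (esym E)); [apply: cast_ordK | apply: cast_ordKV].
Qed.

Theorem theorem16 (a n p : nat) (V : finType) (e : rel V) :
  1 <= a -> 1 < n -> 1 < p ->
  simple_graph e -> regular e ->
  (distance_magic (lexprod (copies (a * p) e) (edgeless n)) <->
   distance_magic (kronprod (copies a (Hnp n p)) e)).
Proof.
move=> ha hn hp _ _.
have [sg [sg' sgK sgK']] : exists f : 'I_a * 'I_p -> 'I_(a * p), bijective f.
  by apply: card_bij; rewrite card_prod !card_ord.
pose psi (x : ('I_a * ('I_p * 'I_n)) * V) : ('I_(a * p) * V) * 'I_n :=
  ((sg (x.1.1, x.1.2.1), x.2), x.1.2.2).
pose psi' (y : ('I_(a * p) * V) * 'I_n) : ('I_a * ('I_p * 'I_n)) * V :=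
  (((sg' y.1.1).1, ((sg' y.1.1).2, y.2)), y.1.2).
have bpsi : bijective psi.
  exists psi'.
    by move=> [[b [i j]] v]; rewrite /psi /psi' /= sgK.
  by move=> [[c v] j]; rewrite /psi /psi' /= -surjective_pairing sgK'.
have bpsi' : bijective psi'.
  exists psi.
    by move=> [[c v] j]; rewrite /psi /psi' /= -surjective_pairing sgK'.
  by move=> [[b [i j]] v]; rewrite /psi /psi' /= sgK.
have j0 : 'I_n by exists 0; apply: ltnW.
split.
- move=> [f1 [bf1 [k H1]]].
  have H1' : forall c v, \sum_(y | e v y) \sum_j (f1 ((c, y), j)).+1 = k.
    by move=> c v; rewrite -(H1 ((c, v), j0)) lex_sum.
  have [h [bh hv]] := @transfer _ _ f1 psi bf1 bpsi.
  exists h; split => //; exists (p.-1 * k).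
  move=> [[b [i j]] v]; rewrite kron_sum.
  rewrite (eq_bigr (fun _ => k)); last first.
    move=> i' _; rewrite -(H1' (sg (b, i')) v).
    by apply: eq_bigr => y _; apply: eq_bigr => j' _; rewrite hv.
  rewrite sum_nat_const.
  suff -> : #|[pred i' : 'I_p | i' != i]| = p.-1 by [].
  by rewrite -[in RHS](card_ord p) -(cardC1 i).
- move=> [f2 [bf2 [k H2]]].
  pose Hs b i v := \sum_(y | e v y) \sum_j (f2 ((b, (i, j)), y)).+1.
  have H2' : forall b i v, \sum_(i' | i' != i) Hs b i' v = k.
    by move=> b i v; rewrite -(H2 ((b, (i, j0)), v)) kron_sum.
  have H3 : forall b i v, p.-1 * Hs b i v = k.
    move=> b i v.
    pose T := \sum_i' Hs b i' v.
    have E : forall i, Hs b i v + k = T.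
      by move=> i1; rewrite /T (bigD1 i1) //= H2'.
    have ET : T = p * (T - k).
      rewrite {1}/T (eq_bigr (fun _ => T - k)); last first.
        by move=> i1 _; rewrite -(E i1) addnK.
      by rewrite sum_nat_const card_ord.
    have Ei := E i.
    move: ET; rewrite -Ei addnK => ET.
    have hp' : p.-1 = p - 1 by rewrite subn1.
    rewrite hp' mulnBl mul1n.
    lia.
  have H4 : forall b i v, Hs b i v = k %/ p.-1.
    move=> b i v; rewrite -(H3 b i v) mulKn //; lia.
  have [h [bh hv]] := @transfer _ _ f2 psi' bf2 bpsi'.
  exists h; split => //; exists (k %/ p.-1).
  move=> [[c v] j]; rewrite lex_sum.
  rewrite -(H4 (sg' c).1 (sg' c).2 v).
  by apply: eq_bigr => y _; apply: eq_bigr => j' _; rewrite hv.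
Qed.
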